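(* Let $\{(F_j,d_j)\}_{j\ge 1}$ be a countable collection of metric spaces with labelled presentations $\mathcal F^j$ (common alphabet $\{1,\dots,m\}$, $m\ge2$) as in the context. If $\mathcal F=\bigcup_{j\ge1}\mathcal F^j$ is a strong modular chaotic structure for $F=\bigcup_{j\ge1}F_j$, then the map $\varPhi$ is modular chaotic in the Li-Yorke sense.
   Context: Setting. Let $(F_j,d_j)$, $j=1,2,\ldots$, be metric spaces and $m\ge2$ a natural number. For each $j$ there is a presentation $\mathcal F^j=\{\mathcal F^j_{i_1i_2\ldots}: i_k\in\{1,\dots,m\}\}$: every infinite sequence over $\{1,\dots,m\}$ labels an element of $F_j$ and every element of $F_j$ has at least one label (not necessarily unique). Put $\delta_j(\mathcal F^j_{i_1i_2\ldots},\mathcal F^j_{j_1j_2\ldots})=d_j(f_1,f_2)$ when the labels correspond to $f_1,f_2\in F_j$; write $\delta$ for $\delta_j$ on $\mathcal F^j$. For fixed $i_1,\dots,i_n$, $\mathcal F^j_{i_1\ldots i_n}=\bigcup_{j_k}\mathcal F^j_{i_1\ldots i_nj_1j_2\ldots}$; $\mathrm{diam}(A)=\sup\{\delta_j(x,y):x,y\in A\}$, $\delta_j(A,B)=\inf\{\delta_j(x,y):x\in A,y\in B\}$. $\mathcal F$ is a strong modular chaotic structure for $F$ if $\sup_j\max_{i_1\ldots i_n}\mathrm{diam}(\mathcal F^j_{i_1\ldots i_n})\to0$ as $n\to\infty$ (strong diameter condition), and for every $j$ there are $\varepsilon_0^j>0$ and a natural $n=n(j)$ such that for any $i_1\ldots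 i_n$ there exist $j_1\ldots j_n$ with $\delta_j(\mathcal F^j_{i_1\ldots i_n},\mathcal F^j_{j_1\ldots j_n})\ge\varepsilon_0^j$, with $\inf_j\varepsilon_0^j>0$. The modular similarity map: $\varphi(\mathcal F^j_{i_1i_2i_3\ldots})=\mathcal F^{j+1}_{i_2i_3\ldots}$. The multivalued map $\varPhi:F\to F$ sends $f\in F_j$ to the points of $F_{j+1}$ labelled by $\varphi(\mathcal F^j_{i_1i_2\ldots})$ for all labels of $f$; $\varPhi$ is modular chaotic in the Li-Yorke sense if $\varphi$ is. A point $\mathcal F^j_{i_1i_2\ldots}$ is (modular-)periodic with period $p$ if its lower index is an endless repetition of a block of $p$ terms. Modular Li-Yorke chaos of $\varphi$: in addition to the modular-periodic points, for each $j=1,2,\ldots$ there is an uncountable scrambled set of non-periodic points in $\mathcal F^j$ such that for each couple $x,y$ in the set with $\delta(x,y)\ne0$: $\limsup_{k\to\infty}\delta(\varphi^k(x),\varphi^k(y))>0$ and $\liminf_{k\to\infty}\delta(\varphi^k(x),\varphi^k(y))=0$; and for each point $x$ of the set and each periodic point $y$ of $\mathcal F^j$: $\limsup_{k\to\infty}\delta(\varphi^k(x),\varphi^k(y))>0$. *)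

(* Defs.v *)
From HB Require Import structures.
From mathcomp Require Import all_boot all_order all_algebra.
From mathcomp Require Import all_classical all_reals all_analysis.
Set Implicit Arguments. Unset Strict Implicit. Unset Printing Implicit Defensive.
Import Order.TTheory GRing.Theory Num.Theory.
Local Open Scope classical_set_scope.
Local Open Scope ring_scope.

(* Labels: infinite sequences over the alphabet {1..m}, encoded as 'I_m. *)
Definition label (m : nat) := nat -> 'I_m.

Definition is_metric (R : realType) (T : Type) (d : T -> T -> R) : Prop :=
  (forall x y, 0 <= d x y) /\ (forall x y, d x y = 0 <-> x = y) /\
  (forall x y, d x y = d y x) /\ (forall x y z, d x z <= d x y + d y z).

Section Defs.
Variables (R : realType) (m : nat) (F : nat -> Type)
  (d : forall j, F j -> F j -> R) (pi : forall j, label m -> F j).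

Definition delta j (x y : label m) : R := d (pi j x) (pi j y).

(* the cylinder F^j_{i_1...i_n} (as a set of labels) *)
Definition cyl n (w : 'I_n -> 'I_m) : set (label m) :=
  [set s | forall k : 'I_n, s k = w k].

Definition diam j (A : set (label m)) : \bar R :=
  ereal_sup [set (delta j x y)%:E | x in A & y in A].

Definition setdist j (A B : set (label m)) : \bar R :=
  ereal_inf [set (delta j x y)%:E | x in A & y in B].

Definition strong_modular_chaotic_structure : Prop :=
  ((fun n => ereal_sup [set diam j (cyl w) | j in [set: nat] & w in [set: 'I_n -> 'I_m]])
      @ \oo --> (0 : \bar R)%E)
  /\
  (exists (eps0 : nat -> R) (nn : nat -> nat),
     (forall j, 0 < eps0 j) /\
     (forall j (w : 'I_(nn j) -> 'I_m), exists w' : 'I_(nn j) -> 'I_m,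
         (setdist j (cyl w) (cyl w') >= (eps0 j)%:E)%E) /\
     (0 < ereal_inf [set (eps0 j)%:E | j in [set: nat]])%E).

(* modular similarity map phi applied k times to a label of F^j,
   yielding a label of F^(j+k); distance at level j+k *)
Definition shiftk (k : nat) (x : label m) : label m := fun i => x (i + k)%N.

Definition delta_iter j (x y : label m) (k : nat) : \bar R :=
  (delta (j + k) (shiftk k x) (shiftk k y))%:E.

Definition periodic_with (p : nat) (x : label m) : Prop :=
  (0 < p)%N /\ forall i, x (i + p)%N = x i.

Definition periodic (x : label m) : Prop := exists p, periodic_with p x.

Definition modular_LiYorke_chaotic : Prop :=
  (forall j : nat, forall p : nat, (0 < p)%N -> exists x : label m, periodic_with p x)
  /\
  forall j : nat, exists S : set (label m),
    ~ countable S /\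
    (forall x, S x -> ~ periodic x) /\
    (forall x y, S x -> S y -> delta j x y != 0 ->
        (0 < limn_esup (delta_iter j x y))%E /\
        limn_einf (delta_iter j x y) = 0%E) /\
    (forall x y, S x -> periodic y -> (0 < limn_esup (delta_iter j x y))%E).

End Defs.

(* Main.v *)
Require Import Defs.
From HB Require Import structures.
From mathcomp Require Import all_boot all_order all_algebra.
From mathcomp Require Import all_classical all_reals all_analysis.
Import Order.TTheory GRing.Theory Num.Theory.
Local Open Scope classical_set_scope.
Local Open Scope ring_scope.

Set Implicit Arguments. Unset Strict Implicit.

Lemma my_esupE (R : realType) (u : (\bar R)^nat) :
  limn_esup u = ereal_inf (range (esups u)).
Proof. by rewrite limn_esup_lim; apply/cvg_lim => //; exact: cvg_esups_inf. Qed.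

Lemma my_einfE (R : realType) (u : (\bar R)^nat) :
  limn_einf u = ereal_sup (range (einfs u)).
Proof. by rewrite limn_einf_lim; apply/cvg_lim => //; exact: cvg_einfs_sup. Qed.

Lemma my_sup_ge (R : realType) (u : (\bar R)^nat) c :
  (forall n, exists k, (n <= k)%N /\ (c <= u k)%E) -> (c <= limn_esup u)%E.
Proof.
move=> H; rewrite my_esupE; apply: le_ereal_inf_tmp => _ [n _ <-].
have [k [nk ck]] := H n; apply: le_trans ck _.
by apply: ereal_sup_ubound; exists k.
Qed.

Lemma my_sup_le (R : realType) (u : (\bar R)^nat) c :
  (forall k, (u k <= c)%E) -> (limn_esup u <= c)%E.
Proof.
move=> H; rewrite my_esupE; apply: le_trans (ereal_inf_lbound _) _.
  by exists 0%N.
by apply: ge_ereal_sup => _ [k _ <-].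
Qed.

Lemma my_sup_lt (R : realType) (u : (\bar R)^nat) c :
  (limn_esup u < c)%E -> exists N, forall k, (N <= k)%N -> (u k < c)%E.
Proof.
rewrite my_esupE => /ereal_inf_lt[_ [N _ <-] hN]; exists N => k Nk.
apply: le_lt_trans hN; by apply: ereal_sup_ubound; exists k.
Qed.

Lemma my_einf0 (R : realType) (u : (\bar R)^nat) :
  (forall k, (0 <= u k)%E) ->
  (forall d : R, 0 < d -> forall n, exists k, (n <= k)%N /\ (u k <= d%:E)%E) ->
  limn_einf u = 0%E.
Proof.
move=> H0 H; rewrite my_einfE; apply/eqP; rewrite eq_le; apply/andP; split.
  apply: ge_ereal_sup => _ [n _ <-].
  apply/lee_addgt0Pr => e e0; rewrite add0e.
  have [k [nk uk]] := H e e0 n; apply: le_trans uk.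
  by apply: ereal_inf_lbound; exists k.
apply: le_trans (ereal_sup_ubound _); last by exists 0%N.
by apply: le_ereal_inf_tmp => _ [k _ <-].
Qed.

Lemma my_cantor (phi : (nat -> bool) -> nat) : ~ injective phi.
Proof.
move=> inj.
pose psi n : nat -> bool := match pselect (exists s, phi s = n) with
  | left h => proj1_sig (cid h) | right _ => fun _ => true end.
pose tau n := ~~ psi n n.
have : psi (phi tau) = tau.
  rewrite /psi; case: pselect => [h|[]]; last by exists tau.
  by case: (cid h) => s /= /inj.
move=> /(congr1 (fun f => f (phi tau))) h.
have h' : psi (phi tau) (phi tau) = ~~ psi (phi tau) (phi tau) := h.
by move: h'; case: (psi _ _).
Qed.

Lemma my_countU T (A B : set T) : countable (A `\` B) -> countable B -> countable A.
Proof.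
move=> /countable_injP[f1 i1] /countable_injP[f2 i2]; apply/countable_injP.
exists (fun x => if pselect (B x) then (f2 x).*2 else (f1 x).*2.+1).
move=> x y /set_mem Ax /set_mem Ay.
case: pselect => Bx; case: pselect => By.
- by move/(congr1 half); rewrite !doubleK; apply: i2; apply/mem_set.
- by move/(congr1 odd); rewrite /= !odd_double.
- by move/(congr1 odd); rewrite /= !odd_double.
- move/(congr1 half); rewrite /= !uphalf_double; apply: i1; apply/mem_set; by split.
Qed.

Lemma my_per_mod m p (y : label m) : periodic_with p y -> forall i, y i = y (i %% p)%N.
Proof.
move=> [p0 hp] i; rewrite {1}(divn_eq i p).
elim: (i %/ p)%N => [|k IH]; first by rewrite mul0n add0n.
by rewrite mulSn -addnA addnC hp.
Qed.

Definition my_code m (y : label m) : nat :=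
  pickle [seq (y : nat -> 'I_m) i | i <- iota 0 (xget 0%N [set p | periodic_with p y])].

Lemma my_code_inj m (y y' : label m) : Defs.periodic y -> Defs.periodic y' ->
  my_code y = my_code y' -> y = y'.
Proof.
move=> hy hy' /(pcan_inj pickleK).
have Hy := xgetPex 0%N hy; have Hy' := xgetPex 0%N hy'.
set p := xget 0%N _ in Hy *; set p' := xget 0%N _ in Hy' *.
move=> e; have ep : p = p' by move: (congr1 size e); rewrite !size_map !size_iota.
apply: funext => i; rewrite (my_per_mod Hy) (my_per_mod Hy') -ep.
have ltp : (i %% p < p)%N by rewrite ltn_mod; case: Hy.
move: (congr1 (fun s => nth (y 0%N) s (i %% p)%N) e) => /=.
rewrite (nth_map 0%N) ?size_iota // nth_iota // add0n.
rewrite (nth_map 0%N) ?size_iota -?ep // nth_iota -?ep // add0n.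
Qed.

Lemma my_ginf i n : exists t, (n <= t)%N /\ logn 2 t.+1 = i.
Proof.
have hpos : (0 < 2 ^ i * n.*2.+1)%N by rewrite muln_gt0 expn_gt0.
exists (2 ^ i * n.*2.+1).-1; rewrite prednK //; split.
  rewrite -ltnS prednK // (leq_trans _ (leq_pmull _ _)) ?expn_gt0 //.
  by rewrite ltnS -addnn leq_addr.
rewrite lognM ?expn_gt0 // pfactorK // logn_coprime ?addn0 //.
by rewrite coprime2n /= odd_double.
Qed.

Fixpoint my_s (f : nat -> nat) (t : nat) : nat :=
  match t with 0 => 0%N | t'.+1 => (my_s f t' + f (my_s f t') + t'.+1)%N end.

Lemma my_s_ge f t : (t <= my_s f t)%N.
Proof. by elim: t => //= t IH; rewrite addnS ltnS leq_addl. Qed.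

Lemma my_s_mono f a b : (a <= b)%N -> (my_s f a <= my_s f b)%N.
Proof.
elim: b => [|b IH]; first by rewrite leqn0 => /eqP ->.
rewrite leq_eqVlt => /orP[/eqP -> //|]; rewrite ltnS => /IH /leq_trans; apply.
by rewrite /= -addnA leq_addr.
Qed.

Lemma my_s_uniq f t t' i :
  (my_s f t <= i < my_s f t + f (my_s f t))%N ->
  (my_s f t' <= i < my_s f t' + f (my_s f t'))%N -> t = t'.
Proof.
wlog: t t' / (t <= t')%N.
  move=> H h1 h2; case: (leqP t t') => tt'; first exact: H.
  by apply/esym/H => //; apply: ltnW.
rewrite leq_eqVlt => /orP[/eqP //|lt] /andP[_ h1] /andP[h2 _].
have := my_s_mono f lt; rewrite /= => h3.
have : (my_s f t + f (my_s f t) < my_s f t + f (my_s f t))%N.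
  apply: (@leq_ltn_trans i) h1; apply: leq_trans (leq_trans h3 h2).
  exact: leq_addr.
by rewrite ltnn.
Qed.

Definition my_x m (f : nat -> nat) (b : nat -> bool) (w : nat -> nat -> 'I_m) (z : 'I_m)
  : label m := fun i =>
  match pselect (exists t, (my_s f t <= i < my_s f t + f (my_s f t))%N) with
  | left h => let t := proj1_sig (cid h) in if b t then w t (i - my_s f t)%N else z
  | right _ => z end.

Lemma my_x_P1 m f b (w : nat -> nat -> 'I_m) z t r : (r < f (my_s f t))%N ->
  my_x f b w z (my_s f t + r)%N = if b t then w t r else z.
Proof.
move=> hr; rewrite /my_x; case: pselect => [h|[]]; last first.
  by exists t; rewrite leq_addr ltn_add2l.
case: (cid h) => t' /= ht'.
have ht : (my_s f t <= my_s f t + r < my_s f t + f (my_s f t))%N.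
  by rewrite leq_addr ltn_add2l.
by have <- := my_s_uniq ht ht'; rewrite addKn.
Qed.

Lemma my_x_P2 m f b (w : nat -> nat -> 'I_m) z t r : (r < t.+1)%N ->
  my_x f b w z (my_s f t + f (my_s f t) + r)%N = z.
Proof.
move=> hr; rewrite /my_x; case: pselect => [h|//].
case: (cid h) => t' /= /andP[h1 h2]; exfalso.
case: (leqP t' t) => tt'.
  move: tt'; rewrite leq_eqVlt => /orP[/eqP e|lt].
    by move: h2; rewrite e ltnNge leq_addr.
  have h3 := my_s_mono f lt; move: h2; rewrite ltnNge => /negP; apply.
  apply: leq_trans (leq_addr r _); apply: leq_trans (leq_addr _ _).
  apply: leq_trans h3; rewrite /=; exact: leq_addr.
have h3 := my_s_mono f tt'; move: h1; rewrite leqNgt => /negP; apply.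
by apply: leq_trans h3; rewrite /= ltn_add2l.
Qed.

Theorem theorem3 (R : realType) (m : nat) (F : nat -> Type)
  (d : forall j, F j -> F j -> R) (pi : forall j, label m -> F j) :
  (2 <= m)%N ->
  (forall j, is_metric (d j)) ->
  (forall j, forall f : F j, exists x : label m, pi j x = f) ->
  strong_modular_chaotic_structure d pi ->
  modular_LiYorke_chaotic d pi.
Proof.
move=> hm dmet surj [hdiam [eps0 [nn [eps_pos [hsep heps]]]]].
have m0 : (0 < m)%N by apply: leq_trans hm.
pose z : 'I_m := Ordinal m0.
split.
  by move=> j p p0; exists (fun _ => z); split.
move=> j.
have d0 : forall l (x : label m), delta d pi l x x = 0.
  by move=> l x; rewrite /delta; have [_ [h _]] := dmet l; apply/h.
have dge0 : forall l (x y : label m), 0 <= delta d pi l x y.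
  by move=> l x y; rewrite /delta; have [h _] := dmet l; apply: h.
have dsym : forall l (x y : label m), delta d pi l x y = delta d pi l y x.
  by move=> l x y; rewrite /delta; have [_ [_ [h _]]] := dmet l; apply: h.
have dtri : forall l (x y w : label m),
    delta d pi l x w <= delta d pi l x y + delta d pi l y w.
  by move=> l x y w; rewrite /delta; have [_ [_ [_ h]]] := dmet l; apply: h.
have [e [e0 he]] : exists e : R, 0 < e /\ forall l, e <= eps0 l.
  set E := ereal_inf _ in heps.
  have EleE : (E <= (eps0 0%N)%:E)%E by apply: ereal_inf_lbound; exists 0%N.
  have Efin : E \is a fin_num.
    by rewrite ge0_fin_numE ?(ltW heps) // (le_lt_trans EleE) ?ltry.
  exists (fine E); split; first by rewrite -lte_fin fineK.
  by move=> l; rewrite -lee_fin fineK //; apply: ereal_inf_lbound; exists l.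
pose sep l : 'I_(nn l) -> 'I_m := proj1_sig (cid (hsep l (fun _ => z))).
have hsepP : forall l (u v : label m), (forall k : 'I_(nn l), u k = z) ->
    (forall k : 'I_(nn l), v k = sep l k) -> e <= delta d pi l u v.
  move=> l u v hu; rewrite /sep; case: cid => w' hw' /= hv.
  rewrite -lee_fin; apply: (@le_trans _ _ (eps0 l)%:E); first by rewrite lee_fin.
  apply: le_trans hw' _; apply: ereal_inf_lbound.
  by exists u => //; exists v.
pose sepn l r : 'I_m := if (insub r : option 'I_(nn l)) is Some o then sep l o else z.
have sepnE : forall l (o : 'I_(nn l)), sepn l o = sep l o by move=> l o; rewrite /sepn valK.
pose f a := nn (j + a).
pose g t := logn 2 t.+1.
pose X (sg : nat -> bool) : label m :=
  my_x f (fun t => sg (g t)) (fun t r => sepn (j + my_s f t)%N r) z.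
have sepK : forall sg sg' i, sg i = false -> sg' i = true -> forall n, exists k,
    (n <= k)%N /\ e <= delta d pi (j + k) (shiftk k (X sg)) (shiftk k (X sg')).
  move=> sg sg' i h1 h2 n; have [t [nt gt]] := my_ginf i n.
  exists (my_s f t); split; first by apply: leq_trans nt (my_s_ge f t).
  apply: hsepP => o; rewrite /shiftk addnC /X my_x_P1 ?(ltn_ord o) //.
    by rewrite /g gt h1.
  by rewrite /g gt h2 sepnE.
have sepD : forall sg sg', sg <> sg' -> forall n, exists k,
    (n <= k)%N /\ e <= delta d pi (j + k) (shiftk k (X sg)) (shiftk k (X sg')).
  move=> sg sg' ne.
  have : ~ (forall i, sg i = sg' i) by move=> h; apply: ne; apply: funext.
  move/existsNP => [i hi].
  case e1 : (sg i); case e2 : (sg' i); rewrite ?e1 ?e2 in hi => //.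
    move=> n; have [k [nk hk]] := sepK sg' sg i e2 e1 n.
    by exists k; split => //; rewrite dsym.
  exact: (sepK sg sg' i e1 e2).
have Xinj : injective X.
  move=> sg sg' eX; apply: contrapT => ne.
  have [k [_ hk]] := sepD sg sg' ne 0%N.
  by move: hk; rewrite eX d0 leNgt e0.
pose S : set (label m) := range X.
pose bad (x y : label m) := ~ (0 < limn_esup (delta_iter d pi j x y))%E.
have K2 : forall x x' y, S x -> S x' -> bad x y -> bad x' y -> x = x'.
  move=> _ _ y [sg _ <-] [sg' _ <-] b1 b2.
  case: (pselect (sg = sg')) => [->//|ne]; exfalso.
  have e20 : 0 < e / 2 by rewrite divr_gt0.
  have lt1 : forall x, bad x y -> (limn_esup (delta_iter d pi j x y) < (e/2)%:E)%E.
    move=> x /negP; rewrite -leNgt => h; apply: le_lt_trans h _.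
    by rewrite lte_fin.
  have [N1 hN1] := my_sup_lt (lt1 _ b1).
  have [N2 hN2] := my_sup_lt (lt1 _ b2).
  have [k [nk hk]] := sepD sg sg' ne (maxn N1 N2).
  have k1 := hN1 k (leq_trans (leq_maxl _ _) nk).
  have k2 := hN2 k (leq_trans (leq_maxr _ _) nk).
  rewrite /delta_iter lte_fin in k1; rewrite /delta_iter lte_fin in k2.
  have := dtri (j + k)%N (shiftk k (X sg)) (shiftk k y) (shiftk k (X sg')).
  rewrite (dsym _ (shiftk k y)) => h.
  have : delta d pi (j + k) (shiftk k (X sg)) (shiftk k (X sg')) < e.
    by apply: le_lt_trans h _; rewrite [e](splitr e) ltrD.
  by rewrite ltNge hk.
pose Bad : set (label m) := [set x | S x /\ exists y, Defs.periodic y /\ bad x y].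
have cBad : countable Bad.
  apply/countable_injP.
  exists (fun x => xget 0%N [set n | exists y, Defs.periodic y /\ bad x y /\ my_code y = n]).
  move=> x x' /set_mem [Sx [y [py hby]]] /set_mem [Sx' [y' [py' hby']]].
  set P1 := [set n | _]; set P2 := [set n | _].
  have : P1 (xget 0%N P1) by apply: xgetPex; exists (my_code y), y.
  move=> [y1 [p1 [b1 c1]]].
  have : P2 (xget 0%N P2) by apply: xgetPex; exists (my_code y'), y'.
  move=> [y2 [p2 [b2 c2]]] exx.
  have ey : y1 = y2 by apply: my_code_inj => //; rewrite c1 c2.
  by apply: (K2 _ _ y1) => //; rewrite ey.
exists (S `\` Bad); split; last split; last split.
- move=> cS'; have := my_countU cS' cBad.
  move/countable_injP => [h hinj].
  apply: (@my_cantor (fun sg => h (X sg))) => sg sg' eh; apply: Xinj.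
  by apply: hinj => //; apply/mem_set; [exists sg|exists sg'].
- move=> x [Sx nBad] px; apply: nBad; split => //; exists x; split => //.
  apply/negP; rewrite -leNgt; apply: my_sup_le => k.
  by rewrite /delta_iter d0.
- move=> _ _ [[sg _ <-] _] [[sg' _ <-] _] hd.
  have ne : sg <> sg' by move=> es; move: hd; rewrite es d0 eqxx.
  split.
    apply: (@lt_le_trans _ _ e%:E); first by rewrite lte_fin.
    apply: my_sup_ge => n; have [k [nk hk]] := sepD sg sg' ne n.
    by exists k; split => //; rewrite /delta_iter lee_fin.
  apply: my_einf0; first by move=> k; rewrite /delta_iter lee_fin.
  move=> dl dl0 n.
  have [N HN] : exists N, forall n, (N <= n)%N -> (ereal_sup [set diam d pi j0 (cyl w) | j0 in [set: nat] & w in [set: 'I_n -> 'I_m]] < dl%:E)%E.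
    move: hdiam => /fine_cvgP [hfin hcvg].
    move/cvgrPdist_lt: hcvg => /(_ dl dl0) hnear.
    have [N _ HN] := filterI hfin hnear.
    exists N => n0 /HN [hf hl]; rewrite -(fineK hf) lte_fin.
    by move: hl; rewrite sub0r normrN => /(le_lt_trans (ler_norm _)).
  pose t := maxn n N.
  pose w : 'I_t.+1 -> 'I_m := fun _ => z.
  exists (my_s f t + f (my_s f t))%N; split.
    apply: leq_trans (leq_addr _ _); apply: leq_trans (my_s_ge f t).
    exact: leq_maxl.
  set k := (my_s f t + f (my_s f t))%N.
  have cw : forall sg0, cyl w (shiftk k (X sg0)).
    by move=> sg0 o; rewrite /shiftk addnC /X my_x_P2 ?(ltn_ord o).
  rewrite /delta_iter; apply/ltW; apply: le_lt_trans (HN t.+1 _); last first.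
    exact: leq_trans (leq_maxr _ _) (leqnSn _).
  apply: le_trans (_ : (diam d pi (j + k) (cyl w) <= _)%E).
    by apply: ereal_sup_ubound; exists (shiftk k (X sg)) => //; exists (shiftk k (X sg')).
  by apply: ereal_sup_ubound; exists (j + k)%N => //; exists w.
- move=> x y [Sx nBad] py.
  apply/negPn/negP => hb; apply: nBad; split => //; exists y; split => //.
  by apply/negP.
Qed.
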